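(* Let $n$ be a natural number and $s$ a negative integer with $n+s>0$, and let $\Delta$ be a divisible design graph with parameters $(V,K,\lambda_1,\lambda_2;m,n)$, where $m=\frac{(-s)(n-1)}{n+s}$, $V=\frac{n(-s)(n-1)}{n+s}$, $K=(-s)(n-1)$, $\lambda_1=(-s)(n+s-1)$, $\lambda_2=\frac{(-s)(n-1)(n+s)}{n}$. Let $P_1,\dots,P_m$ be its canonical classes. Then for all $i,j\in\{1,\dots,m\}$ (including $i=j$), every vertex of $P_i$ has exactly $n+s$ neighbours in $P_j$; i.e., the quotient matrix of the canonical partition is $(n+s)J$, where $J$ is the $m\times m$ all-ones matrix.
   Context: A $K$-regular graph on $V$ vertices, neither complete nor edgeless, is a divisible design graph with parameters $(V,K,\lambda_1,\lambda_2;m,n)$ if its vertex set can be partitioned into $m$ classes (canonical classes) of size $n$ such that any two distinct vertices in the same class have exactly $\lambda_1$ common neighbours and any two vertices in different classes have exactly $\lambda_2$ common neighbours. The quotient matrix of the canonical partition is the $m\times m$ matrix $R=(r_{ij})$ where $r_{ij}$ is the number of neighbours in $P_j$ of a vertex of $P_i$ (this number is known to be independent of the chosen vertex of $P_i$). *)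

(* Defs.v *)
From mathcomp Require Import all_boot all_order all_algebra.
Set Implicit Arguments. Unset Strict Implicit. Unset Printing Implicit Defensive.

(* The canonical partition into m classes is
   given by a class map P : T -> 'I_m (class P_i = preimage of i). *)

Definition neighbours (T : finType) (adj : rel T) (x : T) : {set T} :=
  [set y | adj x y].

Definition common_neighbours (T : finType) (adj : rel T) (x y : T) : {set T} :=
  [set z | adj x z && adj y z].

Definition is_ddg (T : finType) (adj : rel T) (V K l1 l2 m n : nat)
    (P : T -> 'I_m) : Prop :=
  (forall x y, adj x y = adj y x) /\
      (forall x, ~~ adj x x) /\
      #|T| = V /\
      (forall x, #|neighbours adj x| = K) /\
      (exists x y, x != y /\ ~~ adj x y) /\
      (exists x y, adj x y) /\
      (forall i : 'I_m, #|[set x | P x == i]| = n) /\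
      (forall x y, x != y -> P x = P y -> #|common_neighbours adj x y| = l1) /\
      (forall x y, P x != P y -> #|common_neighbours adj x y| = l2).

(* Main.v *)
Require Import Defs.
From mathcomp Require Import all_boot all_order all_algebra.
From mathcomp Require Import ring lra zify.
Import GRing.Theory Num.Theory.
Local Open Scope ring_scope.

Lemma card_setE (T : finType) (p : pred T) :
  #|[set z | p z]| = (\sum_z (p z : nat))%N.
Proof.
rewrite cardsE -sum1_card big_mkcond /=; apply: eq_bigr => z _.
by case: ifP => H /=; move: H; rewrite unfold_in => ->.
Qed.

Lemma sum_filt (T : finType) (q : pred T) (g : T -> nat) :
  (\sum_y (q y : nat) * g y)%N = (\sum_(y | q y) g y)%N.
Proof.
rewrite [RHS]big_mkcond; apply: eq_bigr => y _.
by case: (q y); rewrite ?mul1n ?mul0n.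
Qed.

Theorem lemma4p1 (n : nat) (s : int) (T : finType) (adj : rel T)
    (V K l1 l2 m : nat) (P : T -> 'I_m) :
  s < 0 -> 0 < n%:Z + s ->
  (m%:R : rat) = ((- s)%:~R * (n%:R - 1)) / (n%:R + s%:~R) ->
  (V%:R : rat) = (n%:R * (- s)%:~R * (n%:R - 1)) / (n%:R + s%:~R) ->
  (K%:R : rat) = (- s)%:~R * (n%:R - 1) ->
  (l1%:R : rat) = (- s)%:~R * (n%:R + s%:~R - 1) ->
  (l2%:R : rat) = ((- s)%:~R * (n%:R - 1) * (n%:R + s%:~R)) / n%:R ->
  is_ddg adj V K l1 l2 n P ->
  forall (i j : 'I_m) (x : T), P x = i ->
    (#|[set y | adj x y && (P y == j)]|%:Z = n%:Z + s).
Proof.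
case: s => [k|k]; first by [].
rewrite NegzE opprK => _ hns _ hV hK hl1 hl2.
move=> [hsym [hirr [hcard [hdeg [_ [_ [hcls [hl1c hl2c]]]]]]]] i j x _.
have hkn : (k.+1 < n)%N by move: hns; rewrite subr_gt0 ltz_nat.
have [a hn] : exists a, n = (a.+1 + k.+1)%N.
  by exists (n - k.+2)%N; lia.
subst n.
set t := k.+1 in hkn hV hK hl1 hl2 *.
have hTR : ((t%:Z)%:~R : rat) = t%:R by [].
have hTN : ((- (t%:Z))%:~R : rat) = - t%:R by rewrite mulrNz.
rewrite hTR hTN in hV hK hl1 hl2.
have haR : (a.+1%:R : rat) != 0 by rewrite pnatr_eq0.
have hnR : ((a.+1 + t)%N%:R : rat) != 0 by rewrite pnatr_eq0 addn_eq0.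
have e1 : (a.+1 + t)%:R - 1 = (a + t)%:R :> rat.
  by rewrite !natrD mulrS; ring.
have e2 : (a.+1 + t)%:R - t%:R = a.+1%:R :> rat.
  by rewrite !natrD; ring.
rewrite !e1 in hV hK hl1 hl2.
rewrite -(addrA _ (- t%:R)) in hl1.
have eK : K = (t * (a + t))%N.
  by apply/eqP; rewrite -(eqr_nat rat) hK natrM.
have el1 : l1 = (t * a)%N.
  apply/eqP; rewrite -(eqr_nat rat) hl1 natrM; apply/eqP; rewrite !natrD mulrS; ring.
have el2 : ((a.+1 + t) * l2 = t * (a + t) * a.+1)%N.
  apply/eqP; rewrite -(eqr_nat rat) natrM hl2 !natrM e2.
  apply/eqP; field; by rewrite -mulrS ?(natrD) ?addrA -?natrD.
have eV : (a.+1 * V = (a.+1 + t) * t * (a + t))%N.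
  apply/eqP; rewrite -(eqr_nat rat) natrM hV !natrM e2.
  apply/eqP; field; by rewrite -mulrS ?(natrD) ?addrA -?natrD.
pose F z := (\sum_y ((adj z y && (P y == j)) : nat))%N.
have hF : forall z, #|[set y | adj z y && (P y == j)]| = F z.
  by move=> z; rewrite card_setE.
have hcn : forall x y, #|common_neighbours adj x y| = (\sum_z ((adj x z && adj y z) : nat))%N.
  by move=> x0 y0; rewrite /common_neighbours card_setE.
have hdg : forall y, (\sum_z (adj y z : nat))%N = K.
  by move=> y; rewrite -(hdeg y) /neighbours card_setE.
have hcl : (\sum_(y | P y == j) 1)%N = (a.+1 + t)%N.
  by rewrite sum1_card -(hcls j) cardsE.
have hA : forall x0, (\sum_z (adj x0 z : nat) * F z)%N = (a.+1 * K)%N.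
  move=> x0.
  transitivity (\sum_y ((P y == j) : nat) * #|common_neighbours adj x0 y|)%N.
    rewrite /F; under eq_bigr => z _ do rewrite big_distrr /=.
    rewrite exchange_big /=; apply: eq_bigr => y _.
    rewrite hcn big_distrr /=; apply: eq_bigr => z _.
    rewrite (hsym z y).
    by case: (adj x0 z); case: (adj y z); case: (P y == j).
  rewrite sum_filt.
  case: (boolP (P x0 == j)) => hx0.
    rewrite (bigD1 x0) //=.
    have -> : #|common_neighbours adj x0 x0| = K.
      by rewrite -(hdeg x0); apply: eq_card => z; rewrite !inE andbb.
    rewrite (eq_bigr (fun _ => l1)); last first.
      move=> y /andP [hy hyx]; apply: hl1c; first by rewrite eq_sym.
      by rewrite (eqP hy) (eqP hx0).
    move: hcl; rewrite (bigD1 x0) //= => hcl.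
    have -> : (\sum_(i0 | (P i0 == j) && (i0 != x0)) l1 = 
       (\sum_(i0 | (P i0 == j) && (i0 != x0)) 1) * l1)%N.
      by rewrite big_distrl /=; apply: eq_bigr => y _; rewrite mul1n.
    move: hcl; set S := (\sum_(i0 | _) 1)%N => hcl.
    have -> : S = (a + t)%N by lia.
    rewrite eK el1; ring.
  rewrite (eq_bigr (fun _ => l2)); last first.
    move=> y hy; apply: hl2c; apply: contra hx0 => /eqP ->; exact: hy.
  have -> : (\sum_(i0 | (P i0 == j)) l2 = (\sum_(i0 | (P i0 == j)) 1) * l2)%N.
    by rewrite big_distrl /=; apply: eq_bigr => y _; rewrite mul1n.
  rewrite hcl eK; nia.
have hB : (\sum_z F z * F z)%N = ((a.+1 + t) * (a.+1 * K))%N.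
  transitivity (\sum_y ((P y == j) : nat) * (\sum_z (adj y z : nat) * F z))%N.
    rewrite {1}/F /=; under eq_bigr => z _ do rewrite mulnC big_distrr /=.
    rewrite exchange_big /=; apply: eq_bigr => y _.
    rewrite big_distrr /=; apply: eq_bigr => z _.
    rewrite (hsym z y).
    by case: (adj y z); case: (P y == j); rewrite /= ?muln0 ?mul0n ?mul1n ?muln1.
  under eq_bigr => y _ do rewrite hA.
  rewrite sum_filt; transitivity (\sum_(y | P y == j) 1 * (a.+1 * K))%N;
    [by apply: eq_bigr => *; rewrite mul1n | by rewrite -big_distrl /= hcl].
have hC : (\sum_z F z)%N = ((a.+1 + t) * K)%N.
  transitivity (\sum_y ((P y == j) : nat) * (\sum_z (adj y z : nat)))%N.
    rewrite /F exchange_big /=; apply: eq_bigr => y _.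
    rewrite big_distrr /=; apply: eq_bigr => z _.
    rewrite (hsym z y).
    by case: (adj y z); case: (P y == j).
  under eq_bigr => y _ do rewrite hdg.
  rewrite sum_filt; transitivity (\sum_(y | P y == j) 1 * K)%N;
    [by apply: eq_bigr => *; rewrite mul1n | by rewrite -big_distrl /= hcl].
have hD : (\sum_(z : T) a.+1 * a.+1)%N = (V * (a.+1 * a.+1))%N.
  by rewrite sum_nat_const cardT -cardE hcard.
have hE : (\sum_z (F z * F z + a.+1 * a.+1))%N = (\sum_z 2 * a.+1 * F z)%N.
  rewrite big_split /= hB hD -big_distrr /= hC.
  have hV2 : (V * (a.+1 * a.+1) = a.+1 * (a.+1 * V))%N by ring.
  rewrite hV2 eV eK; ring.
have hsum : \sum_z ((F z)%:R - a.+1%:R) ^+ 2 = 0 :> rat.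
  transitivity ((\sum_z (F z * F z + a.+1 * a.+1))%N%:R - (\sum_z 2 * a.+1 * F z)%N%:R : rat).
    rewrite !natr_sum -sumrB; apply: eq_bigr => z _.
    rewrite natrD !natrM; ring.
  by rewrite hE subrr.
have := psumr_eq0P (fun z _ => sqr_ge0 ((F z)%:R - a.+1%:R)) hsum (i:=x) isT.
move/eqP; rewrite sqrf_eq0 subr_eq0 eqr_nat => /eqP hFx.
by rewrite hF hFx PoszD addrK.
Qed.
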